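(* Let $\mathbb{U}_m\subset\mathbb{R}^m$ be a compact convex polytope and $\Delta=(\Delta_i)_{i\in I}$ a simplicial mesh of $\mathbb{R}^n\times\mathbb{U}_m$ such that (1) the family $D=(D_q)_{q\in\mathcal{Q}}$ of projections $p(\Delta_i)$ of the cells onto $\mathbb{R}^n$ is a simplicial mesh of $\mathbb{R}^n$, and (2) for all $i,j\in I$, either $p(\Delta_i)=p(\Delta_j)$ or the interiors of $p(\Delta_i)$ and $p(\Delta_j)$ are disjoint. For $q\in\mathcal{Q}$ let $\mathcal{K}(q)=\{i\in I : p(\Delta_i)=D_q\}$. Then for every $q\in\mathcal{Q}$, $$D_q\times\mathbb{U}_m=\bigcup_{q'\in\mathcal{K}(q)}\Delta_{q'}.$$
   Context: $p:\mathbb{R}^n\times\mathbb{R}^m\to\mathbb{R}^n$ denotes the orthogonal projection onto the state space $\mathbb{R}^n$. A simplicial mesh of a set $E\subset\mathbb{R}^k$ is a locally finite family of $k$-simplices covering $E$, any two of which intersect in a common face (possibly empty). *)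

(* Defs.v *)
From HB Require Import structures.
From mathcomp Require Import all_boot all_order all_algebra.
From mathcomp Require Import all_classical all_reals all_analysis.
Set Implicit Arguments. Unset Strict Implicit. Unset Printing Implicit Defensive.
Import Order.TTheory GRing.Theory Num.Theory.
Import numFieldNormedType.Exports.
Local Open Scope classical_set_scope.
Local Open Scope ring_scope.

(* Points of R^k are row vectors 'rV[R]_k; R^n x R^m is 'rV[R]_(n + m),
   and the projection p onto R^n is lsubmx. *)

Definition hull_on (R : realType) (k N : nat) (v : 'I_N -> 'rV[R]_k)
  (J : {set 'I_N}) : set 'rV[R]_k :=
  [set x | exists l : 'I_N -> R,
     (forall i, 0 <= l i) /\ (forall i, i \notin J -> l i = 0) /\
     \sum_(i < N) l i = 1 /\ x = \sum_(i < N) l i *: v i].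

Definition affinely_indep (R : realType) (k : nat) (v : 'I_k.+1 -> 'rV[R]_k) : Prop :=
  row_free (\matrix_(i < k) (v (lift ord0 i) - v ord0)).

Definition is_simplex (R : realType) (k : nat) (S : set 'rV[R]_k) : Prop :=
  exists v : 'I_k.+1 -> 'rV[R]_k, affinely_indep v /\ S = hull_on v (finset.setTfor _).

Definition is_face (R : realType) (k : nat) (S F : set 'rV[R]_k) : Prop :=
  exists v : 'I_k.+1 -> 'rV[R]_k, affinely_indep v /\ S = hull_on v (finset.setTfor _) /\
    exists J : {set 'I_k.+1}, F = hull_on v J.

Definition simplicial_mesh (R : realType) (k : nat) (I : Type)
  (T : I -> set 'rV[R]_k) (E : set 'rV[R]_k) : Prop :=
  (forall i, is_simplex (T i)) /\
  (forall x : 'rV[R]_k, exists U, nbhs x U /\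
      finite_set [set i | U `&` T i !=set0]) /\
  \bigcup_i T i = E /\
  (forall i j, is_face (T i) (T i `&` T j) /\ is_face (T j) (T i `&` T j)).

Definition is_polytope (R : realType) (m : nat) (U : set 'rV[R]_m) : Prop :=
  exists (N : nat) (w : 'I_N -> 'rV[R]_m), U = hull_on w (finset.setTfor _).

Definition setXrow (R : realType) (n m : nat) (A : set 'rV[R]_n)
  (B : set 'rV[R]_m) : set 'rV[R]_(n + m) :=
  [set x | A (lsubmx x) /\ B (rsubmx x)].

(* Main.v *)
Require Import Defs.
From HB Require Import structures.
From mathcomp Require Import all_boot all_order all_algebra.
From mathcomp Require Import all_classical all_reals all_analysis.
From mathcomp Require Import ring lra.
Set Implicit Arguments. Unset Strict Implicit. Unset Printing Implicit Defensive.
Import Order.TTheory GRing.Theory Num.Theory.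
Import numFieldNormedType.Exports.
Local Open Scope classical_set_scope.
Local Open Scope ring_scope.
Section Simplex.
Variables (R : realType) (k : nat) (v : 'I_k.+1 -> 'rV[R]_k).
Definition Mv : 'M[R]_k := \matrix_(i < k) (v (lift ord0 i) - v ord0).
Definition mu (x : 'rV[R]_k) := (x - v ord0) *m invmx Mv.

Lemma comb_eq (l : 'I_k.+1 -> R) :
  \sum_j l j *: v j = (\sum_j l j) *: v ord0 + (\row_i l (lift ord0 i)) *m Mv.
Proof.
rewrite mulmx_sum_row big_ord_recl [X in _ = X *: _ + _]big_ord_recl /=.
rewrite scalerDl scaler_suml -addrA; congr (_ + _).
rewrite -big_split /=; apply: eq_bigr => i _.
by rewrite rowK mxE scalerBr addrC subrK.
Qed.
Hypothesis hv : Mv \in unitmx.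

Lemma hull_mu x : hull_on v (finset.setTfor _) x <->
  (forall i, 0 <= mu x 0 i) /\ \sum_i mu x 0 i <= 1.
Proof.
split.
  move=> [l [l0 [_ [l1 ->]]]].
  have -> : mu (\sum_j l j *: v j) = \row_i l (lift ord0 i).
    by rewrite /mu comb_eq l1 scale1r addrC addKr mulmxK.
  split=> [i|]; first by rewrite mxE.
  under eq_bigr do rewrite mxE.
  move: l1; rewrite big_ord_recl => l1.
  have := l0 ord0; lra.
move=> [m0 m1].
pose l j := if unlift ord0 j is Some i then mu x 0 i else 1 - \sum_i mu x 0 i.
have lE i : l (lift ord0 i) = mu x 0 i by rewrite /l liftK.
have l0E : l ord0 = 1 - \sum_i mu x 0 i by rewrite /l unlift_none.
have ls : \sum_j l j = 1.
  by rewrite big_ord_recl; under eq_bigr do rewrite lE; rewrite l0E subrK.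
exists l; split; [|split; [by move=> i; rewrite finset.in_setT|split; [exact: ls|]]].
  move=> j; case: (unliftP ord0 j) => [i ->|->]; first by rewrite lE.
  by rewrite l0E subr_ge0.
rewrite comb_eq ls scale1r.
have -> : \row_i l (lift ord0 i) = mu x by apply/rowP => i; rewrite mxE lE.
by rewrite /mu mulmxKV // addrC subrK.
Qed.
Lemma mu_cont i : continuous (fun z => mu z 0 i).
Proof.
have E : (fun z => ((z - v ord0) *m invmx Mv) 0 i) =
  (fun z => \sum_(j <- index_enum 'I_k | true) ((z 0 j - v ord0 0 j) * invmx Mv j i)).
  by apply: funext => z; rewrite !mxE; apply: eq_bigr => j _; rewrite !mxE.
rewrite /mu E; apply: continuous_big; first exact: add_continuous.
move=> j _ z; apply: cvgMl; first by apply: nbhs_filter.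
exact: (cvgB (@coord_continuous R 1 k 0 j z) (cvg_cst (v ord0 0 j))).
Qed.
Lemma sum_mu_cont : continuous (fun z => \sum_i mu z 0 i).
Proof.
apply: continuous_big; first exact: add_continuous.
by move=> i _; exact: mu_cont.
Qed.

Lemma closed_hull : closed (hull_on v (finset.setTfor _)).
Proof.
have -> : hull_on v (finset.setTfor _) =
  (\bigcap_(i in setT) ((fun z => mu z 0 i) @^-1` [set r | 0 <= r])) `&`
  ((fun z => \sum_i mu z 0 i) @^-1` [set r | r <= 1]).
  apply: funext => z; apply: propext; rewrite hull_mu; split.
    by move=> [H1 H2]; split => //= i _; exact: H1.
  by move=> [H1 H2]; split => // i; exact: H1.
apply: closedI.
  apply: closed_bigI => i _; apply: (continuous_closedP _).1;
    [exact: mu_cont|exact: closed_ge].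
apply: (continuous_closedP _).1; [exact: sum_mu_cont|exact: closed_le].
Qed.

Lemma interior_hull y : (forall i, 0 < mu y 0 i) -> \sum_i mu y 0 i < 1 ->
  (hull_on v (finset.setTfor _))° y.
Proof.
move=> H1 H2.
have h1 : \forall z \near y, forall i, 0 < mu z 0 i.
  apply: (@filter_forall _ _ (fun i z => 0 < mu z 0 i) (nbhs y) _) => i.
  have O : nbhs (mu y 0 i) [set r : R | 0 < r].
    by apply: open_nbhs_nbhs; split; [exact: open_gt|exact: H1].
  exact: (mu_cont O).
have h2 : \forall z \near y, \sum_i mu z 0 i < 1.
  have O : nbhs (\sum_i mu y 0 i) [set r : R | r < 1].
    by apply: open_nbhs_nbhs; split; [exact: open_lt|exact: H2].
  exact: (sum_mu_cont O).
rewrite /interior /=; apply: filterS2 h1 h2 => z G1 G2.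
by apply/hull_mu; split; [move=> i; exact: ltW|exact: ltW].
Qed.

Lemma mu_affine (t : R) a b :
  mu ((1 - t) *: a + t *: b) = (1 - t) *: mu a + t *: mu b.
Proof.
rewrite /mu.
have -> : (1 - t) *: a + t *: b - v ord0 = (1 - t) *: (a - v ord0) + t *: (b - v ord0).
  by rewrite !scalerBr addrACA -opprD -scalerDl subrK scale1r.
by rewrite mulmxDl -!scalemxAl.
Qed.

Definition bary := v ord0 + const_mx (k.+1%:R^-1) *m Mv.

Lemma mu_bary : mu bary = const_mx (k.+1%:R^-1).
Proof. by rewrite /mu /bary addrC addKr mulmxK. Qed.

Lemma interior_seg y t : hull_on v (finset.setTfor _) y -> 0 < t <= 1 ->
  (hull_on v (finset.setTfor _))° ((1 - t) *: y + t *: bary).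
Proof.
move=> /hull_mu [m0 m1] /andP [t0 t1].
have kp : 0 < k.+1%:R^-1 :> R by rewrite invr_gt0 ltr0n.
apply: interior_hull; rewrite mu_affine mu_bary; move: m0 m1; set m := mu y; clearbody m => m0 m1.
  move=> i; rewrite !mxE.
  have := m0 i; have : 0 <= 1 - t by lra.
  move=> a b; have h1 := mulr_ge0 a b; have h2 := mulr_gt0 t0 kp.
  by apply: (lt_le_trans h2); rewrite lerDr.
under eq_bigr do rewrite !mxE.
rewrite big_split /= -!mulr_sumr sumr_const card_ord -[X in t * X]mulr_natr.
have e : k%:R * k.+1%:R^-1 < 1 :> R.
  by rewrite ltr_pdivrMr ?ltr0n // mul1r ltr_nat.
rewrite mulrC in e.
have h : (1 - t) * \sum_i m 0 i <= 1 - t.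
  by rewrite -[leRHS]mulr1 ler_wpM2l //; lra.
have h' : t * (k.+1%:R^-1 * k%:R) < t by rewrite -[ltRHS]mulr1 ltr_pM2l.
by have := ler_ltD h h'; rewrite subrK.
Qed.
End Simplex.

Lemma seg_near (R : realType) (k : nat) (a b : 'rV[R]_k) (V : set 'rV[R]_k) :
  nbhs a V -> exists t : R, 0 < t <= 1 /\ V ((1 - t) *: a + t *: b).
Proof.
move=> /nbhs_ballP [e e0 eV].
set d := `|a - b|.
have d0 : 0 <= d by rewrite /d normr_ge0.
have de : 0 < d + e by exact: ltr_wpDl d0 e0.
exists (e / (d + e)); split.
  apply/andP; split; first by rewrite divr_gt0.
  by rewrite ler_pdivrMr // mul1r lerDr.
apply: eV; rewrite -ball_normE /ball_ /=.
have -> : a - ((1 - e / (d + e)) *: a + e / (d + e) *: b) = (e / (d + e)) *: (a - b).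
  by rewrite scalerBl scale1r scalerBr opprD opprB addrA [a + _]addrC subrK.
rewrite normrZ ger0_norm; last by rewrite divr_ge0 // ltW.
rewrite -/d mulrAC ltr_pdivrMr // ltr_pM2l // ltrDl; exact: e0.
Qed.

Lemma simplex_unit (R : realType) k (v : 'I_k.+1 -> 'rV[R]_k) :
  affinely_indep v -> Mv v \in unitmx.
Proof. by rewrite /affinely_indep -row_free_unit. Qed.

Unset Implicit Arguments.
Unset Strict Implicit.
Theorem lemma3 (R : realType) (n m : nat) (Um : set 'rV[R]_m)
  (I : Type) (Delta : I -> set 'rV[R]_(n + m))
  (Q : Type) (D : Q -> set 'rV[R]_n) :
  is_polytope Um ->
  simplicial_mesh Delta (setXrow [set: 'rV[R]_n] Um) ->
  (* D is the family of the projections p(Delta_i) *)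
  (forall i, exists q, lsubmx @` Delta i = D q) ->
  (forall q, exists i, D q = lsubmx @` Delta i) ->
  simplicial_mesh D [set: 'rV[R]_n] ->
  (forall i j, lsubmx @` Delta i = lsubmx @` Delta j \/
     (lsubmx @` Delta i)° `&` (lsubmx @` Delta j)° = set0) ->
  forall q : Q,
    setXrow (D q) Um = \bigcup_(i in [set i | lsubmx @` Delta i = D q]) Delta i.
Proof.
move=> _ [Ssimp [LF [Cov _]]] H3 H4 [DSimp _] H2 q.
apply: funext => x; apply: propext; split; last first.
  move=> [i Pi Dix]; split; first by rewrite -Pi; exists x.
  have : setXrow [set: 'rV[R]_n] Um x by rewrite -Cov; exists i.
  by case.
move=> [Dqx Umx].
have [i0 Hi0] := H4 q.
have [v [hv Dv]] := DSimp q.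
have uv := simplex_unit hv.
set y := lsubmx x; set u := rsubmx x.
set c := bary v.
have [U [Ux Ufin]] := LF x.
set PF := [set i | lsubmx @` Delta i = D q] `&` [set i | U `&` Delta i !=set0].
set G := \bigcup_(S in Delta @` PF) S.
have clG : closed G.
  apply: closed_bigcup.
    apply: finite_image; apply: sub_finite_set Ufin; by move=> i [].
  move=> _ [i _ <-].
  have [w [hw ->]] := Ssimp i.
  exact: closed_hull (simplex_unit hw).
suff : G x.
  by move=> [_ [j [Pj _] <-] Djx]; exists j.
rewrite ((closure_id G).1 clG) => B Bx.
have BU : nbhs x (B `&` U) by apply: filterI.
have [t [t01 Hz]] := seg_near (row_mx c u) BU.
set z := (1 - t) *: x + t *: row_mx c u in Hz.
set yt := (1 - t) *: y + t *: c.
have zE : z = row_mx yt u.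
  rewrite /z -{1}(hsubmxK x) scale_row_mx scale_row_mx add_row_mx.
  by rewrite -scalerDl subrK scale1r.
have : setXrow [set: 'rV[R]_n] Um z by rewrite zE; split; rewrite ?row_mxKl ?row_mxKr.
rewrite -Cov => -[j _ Djz].
have ytj : (lsubmx @` Delta j) yt by exists z; rewrite // zE row_mxKl.
have yint : (D q)° yt by rewrite Dv; apply: interior_seg => //; rewrite -Dv.
have Pj : lsubmx @` Delta j = D q.
  have [q' Hq'] := H3 j.
  have [v' [hv' Dv']] := DSimp q'.
  have uv' := simplex_unit hv'.
  have [s [s01 Hw]] := seg_near (bary v') (nbhs_interior yint).
  have w2 : (D q')° ((1 - s) *: yt + s *: bary v').
    by rewrite Dv'; apply: interior_seg => //; rewrite -Dv' -Hq'.
  case: (H2 i0 j) => [<-|E]; first by rewrite Hi0.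
  exfalso; have : ((lsubmx @` Delta i0)° `&` (lsubmx @` Delta j)°) ((1 - s) *: yt + s *: bary v').
    by rewrite -Hi0 Hq'; split.
  by rewrite E.
exists z; split; last by case: Hz.
exists (Delta j) => //; exists j => //; split => //; exists z => //; by case: Hz.
Qed.
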